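(* For all non-negative integers $\beta$ and $k$, let $$X := \{(\alpha, l) \in \mathbb{Z}^2 : 0 \leq \alpha \leq \beta,\ 0 \leq l \leq k,\ (\alpha,l) \neq (\beta, k),\ (q-1) \mid (\beta + k -(\alpha + l)) \}.$$ Then $L(\chi_t^0, 0) = 1$, and $$L(\chi_t^\beta,-k) = 1 - \sum_{(\alpha,l) \in X}{\beta \choose \alpha}{k \choose l}t^\alpha \theta^l\, L(\chi_t^\alpha, -l).$$
   Context: Let $q$ be a power of a prime $p$, $A=\mathbb{F}_q[\theta]$, and $A_+(d)$ the set of monic polynomials in $A$ of degree $d$. Let $t$ be an indeterminate and $\chi_t:A\to\mathbb{F}_q[t]$ the $\mathbb{F}_q$-algebra morphism with $\theta\mapsto t$; $\chi_t(a)^0:=1$. For non-negative integers $\beta,k,d$ let $S_d(\chi_t^\beta,k):=\sum_{a\in A_+(d)}\chi_t(a)^\beta a^k\in A[t]$. It is known that $S_d(\chi_t^\beta,k)=0$ for all sufficiently large $d$, so $z(\chi_t^\beta,x,-k):=\sum_{d\ge0}x^{-d}S_d(\chi_t^\beta,k)$ is a polynomial in $x^{-1}$ over $A[t]$, and one defines $L(\chi_t^\beta,-k):=z(\chi_t^\beta,1,-k)=\sum_{d\ge 0}S_d(\chi_t^\beta,k)\in A[t]$. *)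

(* Defs.v *)
From HB Require Import structures.
From mathcomp Require Import all_boot all_order all_algebra.
From Stdlib Require Import ClassicalEpsilon.
Set Implicit Arguments. Unset Strict Implicit. Unset Printing Implicit Defensive.
Import GRing.Theory.
Local Open Scope ring_scope.

(* F : finite field F_q, q = #|F|.  A = F_q[theta] = {poly F}.
   A[t] = {poly {poly F}}: outer variable t = 'X, inner variable theta. *)

Section Carlitz.
Variable F : finFieldType.

Definition Apt := {poly {poly F}}.

Definition tvar : Apt := 'X.
Definition theta : Apt := ('X : {poly F})%:P.

(* chi_t : A -> F_q[t] subset A[t], theta |-> t *)
Definition chi_t (a : {poly F}) : Apt := map_poly polyC a.

(* The monic polynomial of degree d with lower coefficients c;
   c ranges over {ffun 'I_d -> F}, giving a bijection onto A_+(d). *)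
Definition monic_of (d : nat) (c : {ffun 'I_d -> F}) : {poly F} :=
  'X^d + \sum_(i < d) c i *: 'X^i.

Definition Ssum (beta k d : nat) : Apt :=
  \sum_(c : {ffun 'I_d -> F})
     chi_t (monic_of c) ^+ beta * ((monic_of c) ^+ k)%:P.

(* A bound N beyond which S_d vanishes (exists by the known result). *)
Definition Lbound (beta k : nat) : nat :=
  epsilon (inhabits 0%N) (fun N => forall d, (N <= d)%N -> Ssum beta k d = 0).

Definition Lval (beta k : nat) : Apt :=
  \sum_(d < Lbound beta k) Ssum beta k d.

End Carlitz.

(* Main.v *)
Require Import Defs.
From HB Require Import structures.
From mathcomp Require Import all_boot all_order all_algebra all_fingroup all_solvable all_field.
From mathcomp Require Import zify.
From Stdlib Require Import Lia.
From mathcomp Require Import ring.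
From Stdlib Require Import ClassicalEpsilon.
Import GRing.Theory.
Local Open Scope ring_scope.
Section S.
Variable F : finFieldType.
Lemma cardF0 : (#|F|%:R : F) = 0.
Proof.
have := @expg_cardG _ [set: F] (GRing.one F) (in_setT _).
rewrite cardsT. move=> H. exact: H.
Qed.

Lemma cardF_gt1 : (1 < #|F|)%N.
Proof. exact: finNzRing_gt1. Qed.

Lemma unit_pow (x : F) : x != 0 -> x ^+ (#|F| - 1) = 1.
Proof.
move=> nz. have := expf_card x.
have e : #|F| = (#|F| - 1).+1 by have := cardF_gt1; lia.
rewrite {1}e exprS -{3}[x]mulr1 => /(mulfI nz) H; exact: H.
Qed.

Lemma unit_powm (x : F) m : x != 0 -> x ^+ m = x ^+ (m %% (#|F| - 1)).
Proof.
move=> nz. rewrite {1}(divn_eq m (#|F| - 1)) exprD mulnC exprM unit_pow // expr1n mul1r //.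
Qed.

Lemma sumX m : \sum_(x : F) x ^+ m =
  if (0 < m)%N && ((#|F| - 1) %| m)%N then -1 else 0.
Proof.
case: m => [|m].
  rewrite /= (eq_bigr (fun _ => 1)); last by move=> *; rewrite expr0.
  by rewrite sumr_const cardT -cardE cardF0.
rewrite /=. case: ifP => Hd.
  rewrite (bigD1 0) //= expr0n /= add0r.
  rewrite (eq_bigr (fun _ => 1)); last first.
    move=> x nz. rewrite unit_powm //. by move: Hd; rewrite /dvdn => /eqP ->; rewrite expr0.
  rewrite sumr_const cardC1.
  have := cardF0. have := cardF_gt1. case: #|F| => [|n] //= _.
  by rewrite -addn1 natrD => /eqP; rewrite addr_eq0 => /eqP.
have [y nzy Hy] : exists2 y : F, y != 0 & y ^+ m.+1 != 1.
  suff : [exists x : F, (x != 0) && (x ^+ m.+1 != 1)].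
    by case/existsP => y /andP[]; exists y.
  apply: contraT => /existsPn H.
  set r := (m.+1 %% (#|F| - 1))%N.
  have r0 : r != 0%N by rewrite /r; move: Hd; rewrite /dvdn => /negbT.
  have pnz : ('X^r - 1 : {poly F}) != 0.
    by rewrite -size_poly_eq0 size_XnsubC // lt0n.
  have := max_poly_roots pnz (rs := enum (predC1 (0:F))).
  rewrite size_XnsubC ?lt0n // enum_uniq -cardE cardC1.
  have rlt : (r < #|F| - 1)%N by rewrite /r ltn_mod; have := cardF_gt1; lia.
  have -> : all (root ('X^r - 1)) (enum (predC1 (0:F))).
    apply/allP => x; rewrite mem_enum /= => nz.
    have := H x; rewrite inE in nz; rewrite nz /= negbK => /eqP hx.
    by rewrite /root !hornerE -/r -unit_powm // hx subrr.
  move=> /(_ isT isT) h; rewrite ltnS in h; move: rlt; rewrite subn1 ltnNge; by rewrite h.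
have E : \sum_(x : F) x ^+ m.+1 = y ^+ m.+1 * \sum_(x : F) x ^+ m.+1.
  rewrite mulr_sumr (reindex_inj (mulfI nzy)). apply: eq_bigr => x _; by rewrite exprMn.
apply/eqP.
have : (1 - y ^+ m.+1) * \sum_(x : F) x ^+ m.+1 == 0 by rewrite mulrBl mul1r -E subrr.
by rewrite mulf_eq0 subr_eq0 eq_sym (negbTE Hy).
Qed.

Lemma Ssum0 b k : Ssum F b k 0 = 1.
Proof.
rewrite /Ssum (eq_bigr (fun _ => 1)).
  by rewrite sumr_const card_ffun card_ord expn0.
move=> c _; rewrite /monic_of big_ord0 addr0 expr0 /chi_t rmorph1 !expr1n.
by rewrite mul1r.
Qed.

Definition hcons d (p : F * {ffun 'I_d -> F}) : {ffun 'I_d.+1 -> F} :=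
  [ffun i => if unlift ord0 i is Some j then p.2 j else p.1].

Arguments hcons {d}.
Lemma hcons_bij d : bijective (@hcons d).
Proof.
exists (fun c : {ffun 'I_d.+1 -> F} => (c ord0, [ffun j => c (lift ord0 j)])).
  by case=> x c; rewrite /hcons /= ffunE unlift_none; congr pair; apply/ffunP=> j; rewrite !ffunE liftK.
move=> c; apply/ffunP => i; rewrite /hcons ffunE /=.
case: unliftP => [j ->|->]; by rewrite ?ffunE.
Qed.

Lemma bump0 i : bump 0 i = i.+1.
Proof. by rewrite /bump leq0n add1n. Qed.

Lemma monic_hcons d x (c : {ffun 'I_d -> F}) :
  monic_of (hcons (x, c)) = 'X * monic_of c + x%:P.
Proof.
rewrite /monic_of big_ord_recl /hcons ffunE unlift_none /=.
under eq_bigr => i _ do rewrite ffunE liftK /= bump0 exprS scalerAr.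
rewrite mulrDr mulr_sumr -exprS expr0 alg_polyC.
by rewrite [x%:P + _]addrC addrA.
Qed.

Lemma swap4 (R : comRingType) (I J K L : finType) (G : I -> J -> K -> L -> R) :
  \sum_i \sum_j \sum_k \sum_l G i j k l = \sum_k \sum_l \sum_i \sum_j G i j k l.
Proof.
transitivity (\sum_i \sum_k \sum_j \sum_l G i j k l).
  by apply: eq_bigr => i _; rewrite exchange_big.
rewrite exchange_big; apply: eq_bigr => k _.
transitivity (\sum_i \sum_l \sum_j G i j k l).
  by apply: eq_bigr => i _; rewrite exchange_big.
by rewrite exchange_big.
Qed.

Lemma rearr (R: comRingType) (c1 c2 X1 X2 T C Th M : R) :
  c1*(X1*(T*C))*(c2*(X2*(Th*M))) = c1*c2*T*Th*(X1*X2)*(C*M).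
Proof. ring. Qed.

Lemma expand b k (m : {poly F}) (x : F) :
  chi_t ('X * m + x%:P) ^+ b * ((('X * m + x%:P) ^+ k)%:P : Apt F) =
  \sum_(a < b.+1) \sum_(l < k.+1)
     (('C(b, a) * 'C(k, l))%:R * tvar F ^+ a * theta F ^+ l * (x ^+ (b - a + (k - l)))%:P%:P)
     * (chi_t m ^+ a * (m ^+ l)%:P).
Proof.
have -> : chi_t ('X * m + x%:P) = x%:P%:P + tvar F * chi_t m.
  by rewrite /chi_t rmorphD rmorphM /= map_polyX map_polyC /= addrC.
have -> : (('X * m + x%:P) ^+ k)%:P = (x%:P%:P + theta F * m%:P) ^+ k :> Apt F.
  by rewrite rmorphXn rmorphD rmorphM addrC.
rewrite !exprDn mulr_suml; apply: eq_bigr => a _.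
rewrite mulr_sumr; apply: eq_bigr => l _.
rewrite exprD !rmorphM /= !rmorphXn /=.
move: (x%:P%:P) (tvar F) (theta F) (chi_t m) ((m)%:P : Apt F) => X T Th C M.

rewrite -(mulr_natl (X ^+ (b-a) * _)) -(mulr_natl (X ^+ (k-l) * _)) !exprMn. exact: rearr.
Qed.

Lemma factor (R : comRingType) (I J : finType) (K : R) (P : I -> R) (Q : J -> R) :
  \sum_i \sum_j K * P i * Q j = K * (\sum_i P i) * \sum_j Q j.
Proof.
rewrite -mulrA mulr_suml mulr_sumr; apply: eq_bigr => i _.
by rewrite mulrA mulr_sumr.
Qed.

Lemma Ssum_rec b k d : Ssum F b k d.+1 =
  - \sum_(a < b.+1)
      \sum_(l < k.+1 | ((nat_of_ord a, nat_of_ord l) != (b, k))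
                       && ((#|F| - 1)%N %| (b + k - (a + l)))%N)
        ('C(b, a) * 'C(k, l))%:R * tvar F ^+ a * theta F ^+ l * Ssum F a l d.
Proof.
rewrite /Ssum (reindex (@hcons d)) /=; last by apply: onW_bij; apply: hcons_bij.
rewrite (eq_bigr (fun p : F * {ffun 'I_d -> F} => \sum_(a < b.+1) \sum_(l < k.+1)
     (('C(b, a) * 'C(k, l))%:R * tvar F ^+ a * theta F ^+ l * (p.1 ^+ (b - a + (k - l)))%:P%:P)
     * (chi_t (monic_of p.2) ^+ a * ((monic_of p.2) ^+ l)%:P))); last first.
  by case=> x c _; rewrite monic_hcons expand.
rewrite -(pair_bigA _ (fun x c => \sum_(a < b.+1) \sum_(l < k.+1)
     (('C(b, a) * 'C(k, l))%:R * tvar F ^+ a * theta F ^+ l * (x ^+ (b - a + (k - l)))%:P%:P)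
     * (chi_t (monic_of c) ^+ a * ((monic_of c) ^+ l)%:P))) /=.
rewrite swap4 -sumrN; apply: eq_bigr => a _.
rewrite [in RHS]big_mkcond -sumrN; apply: eq_bigr => l _ /=.
rewrite factor -!rmorph_sum /= sumX.
have la := ltn_ord a; have ll := ltn_ord l.
have -> : (b + k - (a + l) = b - a + (k - l))%N by lia.
have -> : (0 < b - a + (k - l))%N = ((nat_of_ord a, nat_of_ord l) != (b, k)).
  rewrite xpair_eqE; apply/idP/idP.
    move=> h; apply/negP => /andP[/eqP e1 /eqP e2]; move: h; rewrite e1 e2; lia.
  move/negP => h; have : ~ (a = b :> nat /\ l = k :> nat).
    by case => e1 e2; apply: h; rewrite e1 e2 !eqxx.
  lia.
case: ifP => _; last by rewrite !rmorph0 mulr0 mul0r oppr0.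
by rewrite !rmorphN !rmorph1 mulrN1 mulNr.
Qed.

Lemma Ssum_van d : forall b k, (b + k < d)%N -> Ssum F b k d = 0.
Proof.
elim: d => [//|d IH] b k hd.
rewrite Ssum_rec big1 ?oppr0 // => a _; rewrite big1 // => l /andP[hne _].
have la := ltn_ord a; have ll := ltn_ord l.
have : ~ (a = b :> nat /\ l = k :> nat).
  by case => e1 e2; move: hne; rewrite e1 e2 eqxx.
move=> h; rewrite IH ?mulr0 //; lia.
Qed.

Lemma sum_trunc (R : comRingType) (f : nat -> R) N P :
  (forall d, (N <= d)%N -> f d = 0) -> (N <= P)%N ->
  \sum_(d < N) f d = \sum_(d < P) f d.
Proof.
move=> H le; rewrite (big_ord_widen P f le) big_mkcond; apply: eq_bigr => i _.
by case: ifP => // /negbT; rewrite -leqNgt => /H ->.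
Qed.

Lemma Lval_eq b k M : (b + k < M)%N -> Lval F b k = \sum_(d < M) Ssum F b k d.
Proof.
move=> hM.
have ex : exists N, forall d, (N <= d)%N -> Ssum F b k d = 0.
  by exists (b + k).+1 => d hd; apply: Ssum_van.
have HN : forall d, (Lbound F b k <= d)%N -> Ssum F b k d = 0.
  exact: (epsilon_spec (inhabits 0%N) _ ex).
rewrite /Lval (@sum_trunc _ _ _ _ HN (leq_maxl _ M)) -(@sum_trunc _ _ M (maxn (Lbound F b k) M)) ?leq_maxr //.
by move=> d hd; apply: Ssum_van; lia.
Qed.
End S.

Theorem corollary2p0p2 (F : finFieldType) (beta k : nat) :
  Lval F 0 0 = 1 /\
  Lval F beta k =
    1 - \sum_(alpha < beta.+1)
          \sum_(l < k.+1 | ((nat_of_ord alpha, nat_of_ord l) != (beta, k))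
                           && ((#|F| - 1)%N %| (beta + k - (alpha + l)))%N)
            ('C(beta, alpha) * 'C(k, l))%:R * tvar F ^+ alpha * theta F ^+ l
              * Lval F alpha l.
Proof.
split.
  by rewrite (@Lval_eq F 0 0 1) // big_ord1 Ssum0.
rewrite (@Lval_eq F beta k (beta + k).+2) // big_ord_recl Ssum0.
under eq_bigr => d _ do rewrite lift0 Ssum_rec.
rewrite sumrN; congr (_ - _).
rewrite exchange_big; apply: eq_bigr => a _.
rewrite exchange_big; apply: eq_bigr => l _.
rewrite -mulr_sumr; congr (_ * _).
have la := ltn_ord a; have ll := ltn_ord l.
by rewrite (@Lval_eq F a l (beta + k).+1) //; lia.
Qed.
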